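(* Let $\mathbb F_q$ be a finite field with $q$ elements, let $n\ge 2$, let $a_1,\dots,a_n,b\in\mathbb F_q^*$ and let $k,k_1,\dots,k_n,m_1,\dots,m_n$ be positive integers. Let $N_q$ be the number of solutions $(x_1,\dots,x_n)\in\mathbb F_q^n$ of $$(a_1x_1^{m_1}+\dots+a_nx_n^{m_n})^k=bx_1^{k_1}\cdots x_n^{k_n},$$ let $N_q(0)$ and $N_q^*(0)$ be the numbers of solutions of $a_1x_1^{m_1}+\dots+a_nx_n^{m_n}=0$ in $\mathbb F_q^n$ and in $(\mathbb F_q^* )^n$ respectively, and let $k_0=\gcd(k,k_1,\dots,k_n,q-1)$. If $b$ is not a $k_0$th power in $\mathbb F_q$, then $N_q=N_q(0)-N_q^*(0)$. If $b$ is a $k_0$th power in $\mathbb F_q$, then $$N_q=k_0(q-1)^{n-1}+N_q(0)-\frac{k_0+q-1}{q-1}\,N_q^*(0)+\sum_{\psi^{k_0}\ne\varepsilon}\psi(b)T(\psi),$$ where the sum is over all multiplicative characters $\psi$ of $\mathbb F_q$ whose order does not divide $k_0$.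
   Context: $\varepsilon$ denotes the trivial multiplicative character of $\mathbb F_q$. A multiplicative character $\psi$ is extended to $\mathbb F_q$ by $\psi(0)=1$ if $\psi$ is trivial and $\psi(0)=0$ otherwise. For a multiplicative character $\psi$, $$T(\psi)=\frac1{q-1}\sum_{\substack{x_1,\dots,x_n\in\mathbb F_q^*\\ a_1x_1^{m_1}+\dots+a_nx_n^{m_n}\ne0}}\psi^{k_1}(x_1)\cdots\psi^{k_n}(x_n)\,\bar\psi^{k}(a_1x_1^{m_1}+\dots+a_nx_n^{m_n}).$$ *)

(* Defs.v *)
From HB Require Import structures.
From mathcomp Require Import all_boot all_algebra all_fingroup all_solvable all_field all_character.
Set Implicit Arguments. Unset Strict Implicit. Unset Printing Implicit Defensive.
Import GRing.Theory Num.Theory.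
Local Open Scope ring_scope.

(* Multiplicative characters of F_q are the (linear = irreducible, the group
   being abelian) characters of the unit group [set: {unit F}]; they are
   indexed by Iirr (units_grp F), with index 0 the trivial character. *)
Definition units_grp (F : finFieldType) : {group {unit F}} := [set: {unit F}]%G.

Definition to_unit (F : finFieldType) (x : F) : {unit F} := insubd (1%g : {unit F}) x.

Definition mchar (F : finFieldType) (i : Iirr (units_grp F)) (x : F) : algC :=
  if x == 0 then (if i == 0 then 1 else 0) else 'chi_i (to_unit x).

Definition mcharX (F : finFieldType) (i : Iirr (units_grp F)) (j : nat) (x : F) : algC :=
  if x == 0 then (if 'chi_i ^+ j == 1 then 1 else 0) else ('chi_i ^+ j)%R (to_unit x).

Definition dform (F : finFieldType) (n : nat) (a : 'I_n -> F) (m : 'I_n -> nat)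
  (x : {ffun 'I_n -> F}) : F := \sum_(i < n) a i * x i ^+ m i.

Definition Tsum (F : finFieldType) (n : nat) (a : 'I_n -> F) (m kk : 'I_n -> nat)
  (k : nat) (i : Iirr (units_grp F)) : algC :=
  (#|F|.-1)%:R^-1 *
  \sum_(x : {ffun 'I_n -> F} | [forall j, x j != 0] && (dform a m x != 0))
     (\prod_(j < n) mcharX i (kk j) (x j)) * (mcharX i k (dform a m x))^*.

(* Main.v *)
Require Import Defs.
From HB Require Import structures.
From mathcomp Require Import all_boot all_algebra all_fingroup all_solvable all_field all_character.
Import GRing.Theory Num.Theory.
Local Open Scope ring_scope.
From mathcomp Require Import ring.
Section Helpers.
Variable F : finFieldType.
Local Notation G := (units_grp F).
Local Notation N := (#|F|.-1).

Lemma abelG : abelian G.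
Proof. exact/cyclic_abelian/field_unit_group_cyclic. Qed.

Lemma linG (i : Iirr G) : 'chi_i \is a linear_char.
Proof. exact: (char_abelianP _ abelG). Qed.

Lemma cardG : #|G| = N.
Proof. exact: card_finField_unit. Qed.

Lemma inG (u : {unit F}) : u \in G.
Proof. by rewrite inE. Qed.

Lemma to_unitK (x : F) : x != 0 -> val (to_unit x) = x.
Proof. by move=> nz; rewrite /to_unit insubdK // unfold_in /= unitfE. Qed.

Definition phi (i : Iirr G) (x : F) := 'chi_i (to_unit x).

Lemma phiM i x y : x != 0 -> y != 0 -> phi i (x * y) = phi i x * phi i y.
Proof.
move=> nx ny; rewrite /phi -(lin_charM (linG i)) ?inG //; congr ('chi_i _).
by apply: val_inj; rewrite FinRing.val_unitM !to_unitK // mulf_neq0.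
Qed.

Lemma phiX i x e : x != 0 -> phi i (x ^+ e) = phi i x ^+ e.
Proof.
move=> nx; rewrite /phi -(lin_charX (linG i)) ?inG //; congr ('chi_i _).
by apply: val_inj; rewrite FinRing.val_unitX !to_unitK // expf_neq0.
Qed.

Lemma phi_prod i n (f : 'I_n -> F) : (forall j, f j != 0) ->
  phi i (\prod_(j < n) f j) = \prod_(j < n) phi i (f j).
Proof.
move=> nz.
have: (\prod_(j < n) f j != 0) /\ phi i (\prod_(j < n) f j) = \prod_(j < n) phi i (f j).
  apply: (big_rec2 (fun y1 y2 => y1 != 0 /\ phi i y1 = y2)).
    split; first exact: oner_neq0.
    rewrite /phi (_ : to_unit 1 = 1%g) ?(lin_char1 (linG i)) //.
    by apply: val_inj; rewrite to_unitK ?oner_neq0.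
  move=> j y1 y2 _ [ny1 <-]; split; first by rewrite mulf_neq0.
  by rewrite phiM.
by case.
Qed.

Lemma phi_orth x y : x != 0 -> y != 0 ->
  \sum_i phi i x * (phi i y)^* = N%:R *+ (x == y).
Proof.
move=> nx ny; rewrite /phi second_orthogonality_relation ?inG //.
have ->: ('C_G[to_unit x])%g = G.
  by apply/setIidPl; rewrite sub_cent1; apply: (subsetP abelG); rewrite inG.
rewrite cardG; congr (_ *+ _).
rewrite (abelian_classP _ abelG (to_unit y) (inG _)) inE.
congr (nat_of_bool _).
apply/idP/idP => /eqP e; apply/eqP; last by rewrite e.
by rewrite -(to_unitK _ nx) -(to_unitK _ ny) e.
Qed.

Lemma mcharXE i j x : x != 0 -> mcharX i j x = phi i x ^+ j.
Proof. by move=> nx; rewrite /mcharX (negbTE nx) exp_cfunE ?inG. Qed.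

Lemma mcharE i x : x != 0 -> mchar i x = phi i x.
Proof. by move=> nx; rewrite /mchar (negbTE nx). Qed.

End Helpers.
Arguments phi {F}.

Section H2.
Variable F : finFieldType.
Local Notation G := (units_grp F).
Local Notation N := (#|F|.-1).

Lemma N_gt0 : (0 < N)%N.
Proof. by rewrite -(cardG F) (cardsD1 1%g) inE. Qed.

Lemma card_Ldiv d : (0 < d)%N -> (d %| N)%N ->
  #|[set u : {unit F} | (u ^+ d == 1)%g]| = d.
Proof.
move=> d0 dN.
have /cyclicP[g Gg] := field_unit_group_cyclic G.
have og : #[g]%g = N by rewrite /order -Gg cardG.
set e := (N %/ d)%N.
have Ne : N = (e * d)%N by rewrite divnK.
have e0 : (0 < e)%N by move: (N_gt0); rewrite Ne muln_gt0 => /andP[].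
have oh : #[g ^+ e]%g = d.
  rewrite orderXdiv og; last by rewrite {1}Ne dvdn_mulr.
  by rewrite {1}Ne mulKn.
rewrite -[RHS]oh /order; apply: eq_card => u; rewrite inE.
apply/idP/idP.
  move/eqP => ud.
  have : u \in <[g]>%g by rewrite -Gg inE.
  case/cycleP => j uj; rewrite uj in ud *.
  move: ud; rewrite -expgM => /eqP; rewrite -order_dvdn og Ne mulnC.
  rewrite [(d * e)%N]mulnC dvdn_pmul2r // => /dvdnP[c ->].
  by rewrite mulnC expgM mem_cycle.
move=> uh; rewrite -order_dvdn -oh; exact: order_dvdG.
Qed.


Lemma orthU (u v : {unit F}) :
  \sum_i 'chi[G]_i u * ('chi_i v)^* = N%:R *+ (u == v).
Proof.
rewrite second_orthogonality_relation; last exact: inG.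
have ->: ('C_G[u])%g = G.
  by apply/setIidPl; rewrite sub_cent1; apply: (subsetP (abelG F)); rewrite inG.
by rewrite cardG (abelian_classP _ (abelG F) v (inG _ _)) inE.
Qed.

Lemma char_sumX (i : Iirr G) d :
  \sum_(u : {unit F}) 'chi[G]_i u ^+ d = N%:R *+ ('chi_i ^+ d == 1).
Proof.
have lx : 'chi_i ^+ d \is a linear_char by apply: rpredX; apply: linG.
have /irrP[j ej] := lin_char_irr lx.
have := cfdot_irr j 0.
rewrite -ej irr0 cfdotE cardG => h.
have N0 : (N%:R : algC) != 0 by rewrite pnatr_eq0 -lt0n N_gt0.
have : \sum_(x in G) ('chi_i ^+ d) x * ((1 : 'CF(G)) x)^* = N%:R * (j == 0)%:R.
  by rewrite -h mulVKf.
rewrite ej irr_eq1 -ej mulr_natr => <-.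
rewrite [in RHS](eq_bigl (fun _ => true)); last by move=> u; rewrite inE.
apply: eq_bigr => u _.
by rewrite cfun1E inG conjC1 mulr1 exp_cfunE ?inG.
Qed.

Lemma count_chi d : (0 < d)%N -> (d %| N)%N ->
  \sum_(i : Iirr G | 'chi_i ^+ d == 1) (1 : algC) = d%:R.
Proof.
move=> d0 dN.
have N0 : (N%:R : algC) != 0 by rewrite pnatr_eq0 -lt0n N_gt0.
apply: (mulfI N0).
rewrite mulr_sumr big_mkcond /=.
transitivity (\sum_i \sum_(u : {unit F}) 'chi[G]_i u ^+ d).
  apply: eq_bigr => i _.
  by rewrite char_sumX mulr1 mulrb.
rewrite exchange_big /=.
transitivity (\sum_(u : {unit F}) (N%:R *+ ((u ^+ d)%g == 1%g) : algC)).
  apply: eq_bigr => u _; rewrite -orthU; apply: eq_bigr => i _.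
  by rewrite (lin_char1 (linG F i)) conjC1 mulr1 (lin_charX (linG F i)) ?inG.
rewrite -[in RHS](card_Ldiv d d0 dN) -[in RHS]sum1_card natr_sum mulr_sumr [RHS]big_mkcond /=.
by apply: eq_bigr => u _; rewrite inE mulrb mulr1; case: ifP.
Qed.

End H2.

Lemma cR (T : finType) (p : pred T) :
  #|[set x | p x]|%:R = \sum_x (p x)%:R :> algC.
Proof.
rewrite -sum1_card natr_sum [LHS]big_mkcond; apply: eq_bigr => x _.
by rewrite inE; case: (p x).
Qed.

Theorem lemma1 (F : finFieldType) (n : nat) (a : 'I_n -> F) (b : F)
    (k : nat) (kk m : 'I_n -> nat) :
  (2 <= n)%N -> (forall i, a i != 0) -> b != 0 ->
  (0 < k)%N -> (forall i, 0 < kk i)%N -> (forall i, 0 < m i)%N ->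
  let q := #|F| in
  let Nq := #|[set x : {ffun 'I_n -> F} |
                 dform a m x ^+ k == b * \prod_(i < n) x i ^+ kk i]| in
  let N0 := #|[set x : {ffun 'I_n -> F} | dform a m x == 0]| in
  let N0s := #|[set x : {ffun 'I_n -> F} | [forall i, x i != 0] && (dform a m x == 0)]| in
  let k0 := gcdn k (gcdn (\big[gcdn/0%N]_(i < n) kk i) q.-1) in
  ((~ exists y : F, y ^+ k0 = b) -> Nq%:R = N0%:R - N0s%:R :> algC) /\
  ((exists y : F, y ^+ k0 = b) ->
     Nq%:R = k0%:R * (q.-1)%:R ^+ n.-1 + N0%:R
             - (k0 + q.-1)%:R / (q.-1)%:R * N0s%:R
             + \sum_(i : Iirr (units_grp F) | 'chi_i ^+ k0 != 1) mchar i b * Tsum a m kk k i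
       :> algC).
Proof.
move=> n2 an0 bn0 kpos kkpos mpos q Nq N0 N0s k0.
have k0pos : (0 < k0)%N by rewrite /k0 gcdn_gt0 kpos.
have k0k : (k0 %| k)%N by rewrite /k0 dvdn_gcdl.
have k0N : (k0 %| q.-1)%N by rewrite /k0 (dvdn_trans (dvdn_gcdr _ _)) // dvdn_gcdr.
have k0kk j : (k0 %| kk j)%N.
  rewrite /k0 (dvdn_trans (dvdn_gcdr _ _)) // (dvdn_trans (dvdn_gcdl _ _)) //.
  by move/dvdn_biggcdP: (dvdnn (\big[gcdn/0%N]_(i < n) kk i)); apply.
pose L x := dform a m x.
pose P (x : {ffun 'I_n -> F}) := [forall j, x j != 0].
pose E x := L x ^+ k == b * \prod_(i < n) x i ^+ kk i.
pose M := \sum_x ((P x && E x)%:R : algC).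
have prodnz x : P x -> \prod_(i < n) x i ^+ kk i != 0.
  move/forallP => h; apply/prodf_neq0 => i _; exact: expf_neq0.
have EL x : P x -> E x -> L x != 0.
  move=> Px; rewrite /E; apply: contraTneq => ->.
  by rewrite expr0n eqn0Ngt kpos /= eq_sym mulf_neq0 // prodnz.
have step1 : Nq%:R = N0%:R - N0s%:R + M.
  rewrite /Nq /N0 /N0s !cR /M -sumrB -big_split /=; apply: eq_bigr => x _.
  rewrite /E /L /P.
  case: (boolP [forall j, x j != 0]) => Px /=.
    have pz := prodnz x Px.
    case: (eqVneq (dform a m x) 0) => [L0|Ln0].
      rewrite L0 expr0n eqn0Ngt kpos /= eq_sym (negbTE (mulf_neq0 bn0 pz)).
      by rewrite subrr add0r.
    by rewrite subrr add0r.
  move/forallPn: Px => [j /negPn /eqP xj].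
  rewrite (bigD1 j) //= xj expr0n eqn0Ngt kkpos /= mul0r mulr0.
  by rewrite expf_eq0 kpos /= subr0 addr0.
split.
  move=> nb; rewrite step1 /M big1 ?addr0 // => x _.
  case Px: (P x) => //=; case Ex: (E x) => //=; exfalso; apply: nb.
  exists (L x ^+ (k %/ k0) / \prod_(i < n) x i ^+ (kk i %/ k0)).
  rewrite expr_div_n -prodrXl -exprM divnK //.
  rewrite (eq_bigr (fun i => x i ^+ kk i)); last by move=> i _; rewrite -exprM divnK.
  by move/eqP: Ex => ->; rewrite mulfK // prodnz.
move=> [y yb].
have yn0 : y != 0.
  apply/eqP => y0; move: bn0; rewrite -yb y0 expr0n eqn0Ngt k0pos /=.
  by rewrite eqxx.
rewrite /q in k0N *.
pose Nc : algC := (#|F|.-1)%:R.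
have Nc0 : Nc != 0 by rewrite pnatr_eq0 -lt0n N_gt0.
pose S (x : {ffun 'I_n -> F}) := [forall j, x j != 0] && (dform a m x != 0).
have M_S : M = \sum_(x | S x) (E x)%:R.
  rewrite /M [RHS]big_mkcond; apply: eq_bigr => x _; rewrite /S /P.
  case: (boolP [forall j, x j != 0]) => Px /=; last by [].
  case: (boolP (E x)) => Ex; first by rewrite (EL x Px Ex).
  by case: ifP.
have allsum : \sum_i mchar i b * Tsum a m kk k i = M.
  rewrite M_S /Tsum.
  transitivity (Nc^-1 * \sum_(x | S x) \sum_i mchar i b *
     ((\prod_(j < n) mcharX i (kk j) (x j)) * (mcharX i k (dform a m x))^* )).
    rewrite exchange_big mulr_sumr /=; apply: eq_bigr => i _.
    by rewrite mulrCA mulr_sumr.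
  rewrite mulr_sumr; apply: eq_bigr => x /andP[Px Lx].
  have Px' : forall j, x j != 0 by move=> j; move/forallP: Px; apply.
  transitivity (Nc^-1 * \sum_i phi i (b * \prod_(j < n) x j ^+ kk j) *
                   (phi i (dform a m x ^+ k))^* ).
    congr (_ * _); apply: eq_bigr => i _.
    rewrite mcharE // mulrA phiM ?prodnz // phi_prod; last by move=> j; rewrite expf_neq0.
    rewrite mcharXE // phiX //; congr (_ * _ * _); apply: eq_bigr => j _.
    by rewrite mcharXE // phiX.
  rewrite phi_orth ?mulf_neq0 ?prodnz ?expf_neq0 // -mulr_natr mulKf //.
  by rewrite /E eq_sym.
have cardS : \sum_(x | S x) (1 : algC) = Nc ^+ n - N0s%:R.
  rewrite /N0s cR.
  transitivity (((\sum_(x : {ffun 'I_n -> F}) ([forall j, x j != 0] : nat)%:R -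
                \sum_(x : {ffun 'I_n -> F}) ([forall j, x j != 0] && (dform a m x == 0) : nat)%:R) : algC)).
    rewrite -sumrB big_mkcond; apply: eq_bigr => x _; rewrite /S.
    by case: [forall j, x j != 0]; case: (dform a m x == 0); rewrite /= ?subrr ?subr0.
  congr (_ - _); rewrite -cR /Nc -natrX; congr (_%:R).
  transitivity #|@ffun_on 'I_n (predC1 (0 : F))|; last by rewrite card_ffun_on cardC1 card_ord.
  apply: eq_card => x; rewrite inE; apply/forallP/ffun_onP => h j; exact: (h j).
have part2 : \sum_(i | ~~ ('chi_i ^+ k0 != 1)) mchar i b * Tsum a m kk k i
            = k0%:R * (Nc^-1 * (Nc ^+ n - N0s%:R)).
  transitivity (\sum_(i : Iirr (units_grp F) | 'chi_i ^+ k0 == 1) 1 * (Nc^-1 * (Nc ^+ n - N0s%:R))).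
    apply: eq_big => [i | i /negPn/eqP c1]; first by rewrite negbK.
    have ones j z : z != 0 -> (k0 %| j)%N -> mcharX i j z = 1.
      move=> zn kj; rewrite mcharXE // -(divnK kj) mulnC exprM /phi.
      by rewrite -exp_cfunE ?inG // c1 cfun1E inG expr1n.
    rewrite mcharE // -yb phiX // /phi -exp_cfunE ?inG // c1 cfun1E inG.
    rewrite /Tsum -cardS; congr (_ * (_ * _)); apply: eq_bigr => x /andP[Px Lx].
    have Px' : forall j, x j != 0 by move=> j; move/forallP: Px; apply.
    rewrite big1; last by move=> j _; rewrite ones.
    by rewrite ones // conjC1 mulr1.
  by rewrite -mulr_suml count_chi.
rewrite step1 -allsum (bigID (fun i => 'chi_i ^+ k0 != 1)) /= part2.
rewrite natrD -/Nc.
have n1 : n = n.-1.+1 by rewrite prednK // (leq_trans _ n2).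
rewrite [in Nc ^+ n]n1 exprS.
field.
exact: Nc0.
Qed.
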